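(* Let $(X,d_X,\mu_X)$ be an mm-space with $X=\operatorname{supp}\mu_X$. Any measure $\mu\in\mathcal M(X;1)$ satisfying $\operatorname{diam}\operatorname{supp}\mu=\operatorname{diam}X<\infty$ is a maximal element of $\mathcal M(X;1)$ with respect to the Lipschitz order.
   Context: An mm-space is a triple $(X,d_X,\mu_X)$ where $(X,d_X)$ is a complete separable metric space and $\mu_X$ is a Borel probability measure on $X$. The 1-measurement is $\mathcal M(X;1):=\{f_*\mu_X \mid f:X\to\mathbb R \text{ is 1-Lipschitz}\}$, a set of Borel probability measures on $\mathbb R$. Two mm-spaces $X,Y$ are mm-isomorphic if there is an isometry $f:\operatorname{supp}\mu_X\to\operatorname{supp}\mu_Y$ with $f_*\mu_X=\mu_Y$. For mm-spaces $X,Y$, write $Y\prec X$ (Lipschitz order) if there is a 1-Lipschitz map $f:\operatorname{supp}\mu_X\to\operatorname{supp}\mu_Y$ with $f_*\mu_X=\mu_Y$; this is a partial order on mm-isomorphism classes. For Borel probability measures $\mu,\nu$ on $\mathbb R$, $\mu\prec\nu$ means $(\mathbb R,|\cdot|,\mu)\prec(\mathbb R,|\cdot|,\nu)$. An element $\mu\in\mathcal M(X;1)$ is maximal if every $\nu\in\mathcal M(X;1)$ with $\mu\prec\nu$ has $(\mathbb R,|\cdot|,\nu)$ mm-isomorphic to $(\mathbb R,|\cdot|,\mu)$. The diameter of a set $A$ is $\sup_{x,y\in A}d(x,y)$. *)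

(* Defs.v *)
From mathcomp Require Import all_boot all_order all_algebra.
From mathcomp Require Import all_classical all_reals all_analysis.
Set Implicit Arguments. Unset Strict Implicit. Unset Printing Implicit Defensive.
Import GRing.Theory Num.Theory.
Local Open Scope classical_set_scope.
Local Open Scope ring_scope.

Section MetricDefs.
Context {R : realType} {T : Type}.
Variable dist : T -> T -> R.

Definition is_metric : Prop :=
  [/\ (forall x y, 0 <= dist x y),
      (forall x y, dist x y = 0 <-> x = y),
      (forall x y, dist x y = dist y x) &
      (forall x y z, dist x z <= dist x y + dist y z)].

Definition metric_complete : Prop :=
  forall u : nat -> T,
    (forall e, 0 < e -> exists N, forall m n, (N <= m)%N -> (N <= n)%N ->
       dist (u m) (u n) < e) ->
    exists l, forall e, 0 < e -> exists N, forall n, (N <= n)%N -> dist (u n) l < e.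

Definition metric_separable : Prop :=
  exists u : nat -> T, forall x e, 0 < e -> exists n, dist x (u n) < e.

Definition metric_open (A : set T) : Prop :=
  forall x, A x -> exists2 r, 0 < r & [set y | dist x y < r] `<=` A.

(** diameter of a set, as an extended real (sup of the empty set is -oo) *)
Definition diam (A : set T) : \bar R :=
  ereal_sup [set e | exists x y, [/\ A x, A y & e = (dist x y)%:E]].

Definition lipschitz1 (f : T -> R) : Prop :=
  forall x y, `|f x - f y| <= dist x y.

Definition supp (mu : set T -> \bar R) : set T :=
  [set x | forall r : R, 0 < r -> (0 < mu [set y | (dist x y < r)%R])%E].

End MetricDefs.

Definition mm_space {R : realType} (d : measure_display) (T : measurableType d)
    (dist : T -> T -> R) : Prop :=
  [/\ is_metric dist, metric_complete dist, metric_separable dist &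
      forall A : set T, measurable A <-> <<s metric_open dist >> A].

Definition distR {R : realType} (x y : R) : R := `|x - y|.

Definition suppR {R : realType} (mu : set R -> \bar R) : set R := supp distR mu.

(** nu belongs to the 1-measurement M(X;1): nu = f_* muX for a 1-Lipschitz f *)
Definition measurement1 {R : realType} (d : measure_display) (T : measurableType d)
    (dist : T -> T -> R) (muX : set T -> \bar R) (nu : set R -> \bar R) : Prop :=
  exists f : T -> R, lipschitz1 dist f /\
    forall A : set R, measurable A -> nu A = muX (f @^-1` A).

(** Lipschitz order on measures on R: [lip_le mu nu] is mu ≺ nu, i.e. there is a
    1-Lipschitz map f : supp nu -> supp mu with f_* nu = mu. *)
Definition lip_le {R : realType} (mu nu : set R -> \bar R) : Prop :=
  exists f : R -> R,
    [/\ (forall x y, suppR nu x -> suppR nu y -> `|f x - f y| <= `|x - y|),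
        (forall x, suppR nu x -> suppR mu (f x)) &
        (forall A : set R, measurable A -> mu A = nu (suppR nu `&` f @^-1` A))].

Definition mm_iso_R {R : realType} (mu nu : set R -> \bar R) : Prop :=
  exists f : R -> R,
    [/\ (forall x y, suppR mu x -> suppR mu y -> `|f x - f y| = `|x - y|),
        (forall x, suppR mu x -> suppR nu (f x)),
        (forall y, suppR nu y -> exists2 x, suppR mu x & f x = y) &
        (forall A : set R, measurable A -> nu A = mu (suppR mu `&` f @^-1` A))].

Definition maximal_measurement {R : realType} (d : measure_display)
    (T : measurableType d) (dist : T -> T -> R) (muX : set T -> \bar R)
    (mu : set R -> \bar R) : Prop :=
  measurement1 dist muX mu /\
  forall nu : probability R R,
    measurement1 dist muX nu -> lip_le mu nu -> mm_iso_R nu mu.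

(* Main.v *)
Require Import Defs.
From mathcomp Require Import all_boot all_order all_algebra.
From mathcomp Require Import all_classical all_reals all_analysis.
From mathcomp Require Import measurable_realfun lra.
Import Order.TTheory GRing.Theory Num.Theory.
Local Open Scope classical_set_scope.
Local Open Scope ring_scope.

Ltac splitnorm :=
  repeat match goal with |- context [ `|?t| ] =>
    let H := fresh in
    case: (lerP 0 t) => H; [rewrite (ger0_norm H) | rewrite (ltr0_norm H)]
  end.

Lemma keyP {R : realFieldType} (x a b X A B D e : R) :
  a <= b -> A <= B -> B - A <= b - a -> b - a <= D -> D - e <= B - A ->
  `|x-a| <= D -> `|x-b| <= D -> `|X-A| <= `|x-a| -> `|X-B| <= `|x-b| ->
  `|(X-A)-(x-a)| <= 4*e.
Proof. splitnorm; lra. Qed.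



Lemma comb1 {R : realFieldType} (u v U V A a e : R) :
  `|(U-A)-(u-a)| <= 4*e -> `|(V-A)-(v-a)| <= 4*e -> `|u-v| - 8*e <= `|U-V|.
Proof. splitnorm; lra. Qed.
Lemma comb2 {R : realFieldType} (u v U V A a e : R) :
  `|(U-A)+(u-a)| <= 4*e -> `|(V-A)+(v-a)| <= 4*e -> `|u-v| - 8*e <= `|U-V|.
Proof. splitnorm; lra. Qed.
Lemma keyP2 {R : realFieldType} (x a b X A B D e : R) :
  b <= a -> A <= B -> B - A <= a - b -> a - b <= D -> D - e <= B - A ->
  `|x-a| <= D -> `|x-b| <= D -> `|X-A| <= `|x-a| -> `|X-B| <= `|x-b| ->
  `|(X-A)+(x-a)| <= 4*e.
Proof. splitnorm; lra. Qed.
Lemma keyP3 {R : realFieldType} (x a b X A B D e : R) :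
  a <= b -> B <= A -> A - B <= b - a -> b - a <= D -> D - e <= A - B ->
  `|x-a| <= D -> `|x-b| <= D -> `|X-A| <= `|x-a| -> `|X-B| <= `|x-b| ->
  `|(X-A)+(x-a)| <= 4*e.
Proof. splitnorm; lra. Qed.
Lemma keyP4 {R : realFieldType} (x a b X A B D e : R) :
  b <= a -> B <= A -> A - B <= a - b -> a - b <= D -> D - e <= A - B ->
  `|x-a| <= D -> `|x-b| <= D -> `|X-A| <= `|x-a| -> `|X-B| <= `|x-b| ->
  `|(X-A)-(x-a)| <= 4*e.
Proof. splitnorm; lra. Qed.

Lemma keyQ {R : realFieldType} {x y a b X Y A B D e : R} :
  `|X-A| <= `|x-a| -> `|X-B| <= `|x-b| ->
  `|Y-A| <= `|y-a| -> `|Y-B| <= `|y-b| -> `|A-B| <= `|a-b| ->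
  `|x-a| <= D -> `|x-b| <= D -> `|y-a| <= D -> `|y-b| <= D -> `|a-b| <= D ->
  D - e <= `|A-B| -> `|x-y| - 8*e <= `|X-Y|.
Proof.
move=> h1 h2 h3 h4 h5 h6 h7 h8 h9 h10 h11.
case: (lerP a b) => ab; case: (lerP A B) => AB.
- have n1 : `|a-b| = b - a by rewrite distrC ger0_norm // subr_ge0.
  have n2 : `|A-B| = B - A by rewrite distrC ger0_norm // subr_ge0.
  rewrite n1 n2 in h5 h10 h11.
  by apply: (comb1 _ _ _ _ A a); apply: (keyP _ _ b _ _ B D).
- have n1 : `|a-b| = b - a by rewrite distrC ger0_norm // subr_ge0.
  have n2 : `|A-B| = A - B by rewrite ger0_norm // subr_ge0 ltW.
  rewrite n1 n2 in h5 h10 h11.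
  by apply: (comb2 _ _ _ _ A a); apply: (keyP3 _ _ b _ _ B D) => //; apply: ltW.
- have n1 : `|a-b| = a - b by rewrite ger0_norm // subr_ge0 ltW.
  have n2 : `|A-B| = B - A by rewrite distrC ger0_norm // subr_ge0.
  rewrite n1 n2 in h5 h10 h11.
  by apply: (comb2 _ _ _ _ A a); apply: (keyP2 _ _ b _ _ B D) => //; apply: ltW.
- have n1 : `|a-b| = a - b by rewrite ger0_norm // subr_ge0 ltW.
  have n2 : `|A-B| = A - B by rewrite ger0_norm // subr_ge0 ltW.
  rewrite n1 n2 in h5 h10 h11.
  by apply: (comb1 _ _ _ _ A a); apply: (keyP4 _ _ b _ _ B D) => //; apply: ltW.
Qed.

Lemma tri3 {R : realFieldType} {x y u v e D : R} :
  `|x-u| < e/2 -> `|y - v| < e/2 -> `|u - v| <= D -> `|x - y| <= D + e.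
Proof. splitnorm; lra. Qed.

Lemma tri4 {R : realFieldType} {p q A B e D : R} :
  D - e/3 < `|p - q| -> `|p - A| < e/3 -> `|q - B| < e/3 -> D - e <= `|A - B|.
Proof. splitnorm; lra. Qed.

Lemma tri5 {R : realFieldType} {x c z r : R} :
  `|x - z| < r/2 -> `|x - c| < r/2 -> `|c - z| < r.
Proof. splitnorm; lra. Qed.

Lemma tri6 {R : realFieldType} {hc hx y c x e : R} :
  `|hc - hx| <= `|c - x| -> `|hx - y| < e/2 -> `|x - c| < e/2 -> `|hc - y| <= e.
Proof. splitnorm; lra. Qed.

Lemma onto_arith {R : realFieldType} {x a rho e1 e0 : R} :
  rho - e1 < `|x - a| -> `|x - a| < rho + e1 -> e0 <= `|x - (a+rho)| -> e1 <= e0 ->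
  `|x - (a - rho)| < e1.
Proof. splitnorm; lra. Qed.

Lemma onto_arith2 {R : realFieldType} {x a X A Y e1 : R} :
  `|X - A| = `|x - a| -> `|Y - X| < e1 ->
  `|Y - A| - e1 < `|x - a| /\ `|x - a| < `|Y - A| + e1.
Proof. move=> <-; splitnorm; lra. Qed.

Lemma nonempty_of_pos d (T : measurableType d) (R : realType)
  (m : {measure set T -> \bar R}) (A : set T) : (0 < m A)%E -> exists x, A x.
Proof.
move=> h; apply: contrapT => /forallNP H.
have A0 : A = set0 by apply/seteqP; split => x // /H.
by move: h; rewrite A0 measure0 ltxx.
Qed.

Lemma mballR (R : realType) (c r : R) : measurable [set y : R | `|c - y| < r].
Proof. have := measurable_ball c r. by rewrite -ball_normE. Qed.



Lemma le_eps (R : realFieldType) (x y : R) :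
  (forall e : R, 0 < e -> x <= y + e) -> x <= y.
Proof. by move=> H; apply/ler_addgt0Pr => e e0; apply: H. Qed.

Theorem proposition1p2 (R : realType) (d : measure_display) (T : measurableType d)
    (dist : T -> T -> R) (muX : probability T R) :
  mm_space dist ->
  supp dist muX = setT ->
  forall mu : probability R R,
    measurement1 dist muX mu ->
    diam distR (suppR mu) = diam dist setT ->
    (diam dist setT < +oo)%E ->
    maximal_measurement dist muX mu.
Proof.
move=> mmX suppX mu [f [lipf hf]] hdiam hfin.
split; first by exists f.
move=> nu [g [lipg hg]] [h [hlip hsupp hpush]].
have [m _] : exists t : T, True.
  apply: contrapT => nt.
  have T0 : [set: T] = set0 by apply/seteqP; split => x // _; apply: nt; exists x.
  by have := probability_setT muX; rewrite T0 measure0 => /eqP; rewrite eq_sym onee_eq0.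
have dist0 : dist m m = 0 by case: mmX => [[_ H _ _] _ _ _]; apply/H.
have Dge : ((dist m m)%:E <= diam dist setT)%E.
  by apply: ereal_sup_ubound; exists m, m; split.
case E : (diam dist setT) hdiam hfin Dge => [D| |] hdiam hfin Dge //.
have Dub : forall t s, dist t s <= D.
  move=> t s; have : ((dist t s)%:E <= D%:E)%E.
    by rewrite -E; apply: ereal_sup_ubound; exists t, s.
  by rewrite lee_fin.
set S := suppR nu.
have Sb : forall x y, S x -> S y -> `|x - y| <= D.
  move=> x y Sx Sy; apply: le_eps => e e0.
  have e20 : 0 < e / 2 by rewrite divr_gt0.
  have [t Ht] : exists t, `|x - g t| < e / 2.
    have := Sx (e/2) e20; rewrite /distR hg; last exact: mballR.
    by move/nonempty_of_pos => [t /= Ht]; exists t.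
  have [s Hs] : exists s, `|y - g s| < e / 2.
    have := Sy (e/2) e20; rewrite /distR hg; last exact: mballR.
    by move/nonempty_of_pos => [s /= Hs]; exists s.
  apply: (tri3 Ht Hs); apply: le_trans (lipg t s) _; exact: Dub.
have nearS : forall p r, suppR mu p -> 0 < r -> exists a, S a /\ `|p - h a| < r.
  move=> p r Sp r0; have := Sp r r0; rewrite /distR hpush; last exact: mballR.
  by move/nonempty_of_pos => [a [Sa /= Ha]]; exists a.
have FB : forall e, 0 < e -> exists a b, [/\ S a, S b & D - e <= `|h a - h b|].
  move=> e e0.
  have e30 : 0 < e / 3 by rewrite divr_gt0.
  have : ((D - e/3)%:E < diam distR (suppR mu))%E.
    by rewrite hdiam lte_fin; lra.
  move/ereal_sup_gt => [_ [p [q [Sp Sq ->]]] ltpq]; rewrite lte_fin /distR in ltpq.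
  have [a [Sa Ha]] := nearS p _ Sp e30.
  have [b [Sb' Hb]] := nearS q _ Sq e30.
  by exists a, b; split => //; apply: (tri4 ltpq Ha Hb).
have Iso : forall x y, S x -> S y -> `|h x - h y| = `|x - y|.
  move=> x y Sx Sy; apply/eqP; rewrite eq_le hlip //=.
  apply: le_eps => e e0.
  have e80 : 0 < e / 8 by rewrite divr_gt0.
  have [a [b [Sa Sb' hab]]] := FB _ e80.
  have := keyQ (hlip _ _ Sx Sa) (hlip _ _ Sx Sb') (hlip _ _ Sy Sa) (hlip _ _ Sy Sb')
    (hlip _ _ Sa Sb') (Sb _ _ Sx Sa) (Sb _ _ Sx Sb') (Sb _ _ Sy Sa) (Sb _ _ Sy Sb')
    (Sb _ _ Sa Sb') hab.
  lra.
exists h; split => //.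
move=> y Sy.
have [a [Sa _]] := nearS y 1 Sy ltr01.
pose P c := forall e, 0 < e -> exists x, [/\ S x, `|h x - y| < e & `|x - c| < e].
have Pok : forall c, P c -> exists2 x, S x & h x = y.
  move=> c Pc.
  have Sc : S c.
    move=> r r0; have r20 : 0 < r / 2 by rewrite divr_gt0.
    have [x [Sx _ xc]] := Pc _ r20.
    have := Sx _ r20; move/lt_le_trans; apply.
    apply: le_measure; rewrite ?inE; try exact: mballR.
    move=> z /=; rewrite /distR => xz; exact: (tri5 xz xc).
  exists c => //.
  apply/eqP; rewrite -subr_eq0 -normr_le0.
  apply: le_eps => e e0; rewrite add0r.
  have e20 : 0 < e / 2 by rewrite divr_gt0.
  have [x [Sx hx xc]] := Pc _ e20.
  exact: (tri6 (hlip _ _ Sc Sx) hx xc).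
case: (pselect (P (a + `|y - h a|))) => [P1|]; first exact: Pok P1.
move/existsNP => [e0 /not_implyP [e00 /forallNP ne]].
apply: (Pok (a - `|y - h a|)) => e e0'.
pose e1 := Order.min e e0.
have e1p : 0 < e1 by rewrite lt_min e0' e00.
have [e1e e1e0] : e1 <= e /\ e1 <= e0.
  by have := le_refl e1; rewrite {2}/e1 le_min => /andP.
have [x [Sx hx]] := nearS y e1 Sy e1p.
exists x; split => //.
  rewrite distrC; exact: lt_le_trans hx e1e.
have nc1 : e0 <= `|x - (a + `|y - h a|)|.
  rewrite leNgt; apply/negP => H; apply: (ne x); split => //.
  rewrite distrC; exact: lt_le_trans hx e1e0.
have [l1 l2] := onto_arith2 (Iso _ _ Sx Sa) hx.
apply: lt_le_trans e1e.
exact: onto_arith l1 l2 nc1 e1e0.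
Qed.
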